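(* Fix $D,\alpha,\theta>0$. Let $G=(V,E)$ be a finite connected graph on $n$ vertices satisfying (bal), (mix), (esc) with parameters $D,\alpha,\theta$, with $n$ sufficiently large (depending only on $D,\alpha,\theta$). Let $\chi>0$ and let $W\subseteq V$ be a nonempty vertex set with $\mathrm{Cap}_r(W)\ge\chi r/\sqrt n$. Then $$\mathcal B_W(G)\le\theta+2D+\frac{36D}{\chi^2}.$$
   Context: $d(v)$ is the degree of $v$, $\delta(G),\Delta(G)$ the minimum and maximum degrees. The lazy random walk $(X_t)$ on $G$ at each step stays put with probability $1/2$ and otherwise moves along a uniformly chosen edge incident to the current vertex; $\Pr_\mu$ denotes its law with $X_0\sim\mu$. Write $\mathbf p^t(u,v)=\Pr_u(X_t=v)$ and $\pi(v)=d(v)/(2|E|)$. The uniform mixing time is $t_{\mathrm{mix}}(G)=\min\{t\ge0:\max_{u,v\in V}|\mathbf p^t(u,v)/\pi(v)-1|\le 1/2\}$, and the bubble sum is $\mathcal B(G)=\sum_{t=0}^{t_{\mathrm{mix}}(G)}(t+1)\sup_{v}\mathbf p^t(v,v)$. Assumptions with parameters $D,\alpha,\theta>0$: (bal) $\Delta(G)/\delta(G)\le D$; (mix) $t_{\mathrm{mix}}(G)\le n^{1/2-\alpha}$; (esc) $\mathcal B(G)\le\theta$. The run time is $r=n^{1/2-\alpha/3}$ (rounded). For nonempty $U\subseteq V$, $\tau_U=\min\{t\ge0:X_t\in U\}$ and $\mathrm{Cap}_r(U)=\Pr_\pi(\tau_U<r)$. $\mathbf p_W^t(u,v)=\Pr(X_t=v\text{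 and }\{X_0,\dots,X_t\}\cap W=\varnothing\mid X_0=u)$ and the $W$-bubble sum is $\mathcal B_W(G)=\sum_{t=0}^\infty(t+1)\sup_{v\in V}\mathbf p_W^t(v,v)$. *)

(* Defs.v *)
From mathcomp Require Import all_boot.
From Stdlib Require Import Reals.
Set Implicit Arguments. Unset Strict Implicit. Unset Printing Implicit Defensive.

Section Walk.
Variables (V : finType) (adj : rel V).

Definition simple_graph : Prop :=
  (forall u v, adj u v = adj v u) /\ (forall u, adj u u = false).

Definition connected_graph : Prop := forall u v, connect adj u v.

Definition nverts : nat := #|V|.

Definition deg (v : V) : nat := #|[pred w | adj v w]|.

Definition maxdeg : nat := \max_(v : V) deg v.
Definition mindeg : nat := \big[minn/#|V|]_(v : V) deg v.

Definition rsum (f : V -> R) : R := \big[Rplus/0%R]_(v : V) f v.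
Definition rsup (f : V -> R) : R := \big[Rmax/0%R]_(v : V) f v.

(* 2|E| and stationary distribution pi(v) = d(v)/(2|E|) *)
Definition twoE : nat := \sum_(v : V) deg v.
Definition pi (v : V) : R := (INR (deg v) / INR twoE)%R.

(* one-step transition probability of the lazy random walk *)
Definition P (u v : V) : R :=
  ((if u == v then / 2 else 0) + (if adj u v then / (2 * INR (deg u)) else 0))%R.

(* p^t(u,v) = Pr_u(X_t = v) *)
Fixpoint pt (t : nat) (u v : V) : R :=
  match t with
  | 0 => if u == v then 1%R else 0%R
  | S k => rsum (fun w => pt k u w * P w v)%R
  end.

(* p_W^t(u,v) = Pr_u(X_t = v and X_0..X_t avoid W) *)
Fixpoint ptW (W : {set V}) (t : nat) (u v : V) : R :=
  match t with
  | 0 => if (u == v) && (u \notin W) then 1%R else 0%R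
  | S k => if v \in W then 0%R else rsum (fun w => ptW W k u w * P w v)%R
  end.

Definition unif_mixed (t : nat) : Prop :=
  forall u v, (Rabs (pt t u v / pi v - 1) <= / 2)%R.
Definition is_tmix (t : nat) : Prop :=
  unif_mixed t /\ forall s, (s < t)%N -> ~ unif_mixed s.

Definition bubble (tm : nat) : R :=
  \big[Rplus/0%R]_(0 <= t < tm.+1) (INR t.+1 * rsup (fun v => pt t v v))%R.

(* Pr_pi(X_0,...,X_{r-1} all avoid U) *)
Definition survive (U : {set V}) (r : nat) : R :=
  match r with
  | 0 => 1%R
  | S k => rsum (fun u => pi u * rsum (fun v => ptW U k u v))%R
  end.

(* Cap_r(U) = Pr_pi(tau_U < r) *)
Definition Cap (r : nat) (U : {set V}) : R := (1 - survive U r)%R.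

Definition bubbleW_partial (W : {set V}) (N : nat) : R :=
  \big[Rplus/0%R]_(0 <= t < N.+1) (INR t.+1 * rsup (fun v => ptW W t v v))%R.

(* B_W(G) <= c, where B_W(G) is the (nonnegative-term, possibly divergent)
   series sum_{t>=0} (t+1) sup_v p_W^t(v,v): i.e. all partial sums are <= c. *)
Definition bubbleW_le (W : {set V}) (c : R) : Prop :=
  forall N, (bubbleW_partial W N <= c)%R.

End Walk.

Definition run_time (n : nat) (alpha : R) : nat :=
  Z.to_nat (Int_part (Rpower (INR n) (/ 2 - alpha / 3) + / 2)).

(* Main.v *)
From HB Require Import structures.
Require Import Defs.
From mathcomp Require Import all_boot.
From Stdlib Require Import Reals Lra Lia.
From Stdlib Require Znat.
Set Implicit Arguments. Unset Strict Implicit. Unset Printing Implicit Defensive.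
Open Scope R_scope.
Lemma RplusA : associative Rplus. Proof. by move=> *; rewrite Rplus_assoc. Qed.
Lemma RmultA : associative Rmult. Proof. by move=> *; rewrite Rmult_assoc. Qed.
HB.instance Definition _ := Monoid.isComLaw.Build R 0%R Rplus RplusA Rplus_comm Rplus_0_l.
HB.instance Definition _ := Monoid.isComLaw.Build R 1%R Rmult RmultA Rmult_comm Rmult_1_l.
HB.instance Definition _ := Monoid.isMulLaw.Build R 0%R Rmult Rmult_0_l Rmult_0_r.
HB.instance Definition _ := Monoid.isAddLaw.Build R Rmult Rplus Rmult_plus_distr_r Rmult_plus_distr_l.

Lemma rsum_le (V : finType) (f g : V -> R) :
  (forall v, f v <= g v) -> rsum f <= rsum g.
Proof. move=> H; apply: (big_ind2 Rle) => //; [lra| move=> *; lra]. Qed.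

Lemma rsum_ge0 (V : finType) (f : V -> R) : (forall v, 0 <= f v) -> 0 <= rsum f.
Proof. move=> H; apply: (big_ind (Rle 0)) => //; [lra| move=> *; lra]. Qed.

Lemma rsum_plus (V : finType) (f g : V -> R) :
  rsum (fun v => f v + g v) = rsum f + rsum g.
Proof. by rewrite /rsum big_split. Qed.

Lemma rsum_scal (V : finType) (c : R) (f : V -> R) :
  rsum (fun v => c * f v) = c * rsum f.
Proof. by rewrite /rsum big_distrr. Qed.

Lemma rsum_scalr (V : finType) (c : R) (f : V -> R) :
  rsum (fun v => f v * c) = rsum f * c.
Proof. by rewrite /rsum big_distrl. Qed.

Lemma rsum_ext (V : finType) (f g : V -> R) : (forall v, f v = g v) -> rsum f = rsum g.
Proof. by move=> H; apply: eq_bigr => v _. Qed.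

Lemma rsum_opp (V : finType) (f : V -> R) :
  rsum (fun v => - f v) = - rsum f.
Proof. have -> : - rsum f = (-1) * rsum f by ring.
rewrite -rsum_scal; apply: rsum_ext => v; ring. Qed.

Lemma rsum_swap (V : finType) (F : V -> V -> R) :
  rsum (fun v => rsum (fun w => F v w)) = rsum (fun w => rsum (fun v => F v w)).
Proof. by rewrite /rsum exchange_big. Qed.

Lemma rsum_delta (V : finType) (v : V) (x : R) :
  rsum (fun w => if w == v then x else 0) = x.
Proof.
rewrite /rsum (bigD1 v) //= eqxx big1 ?Rplus_0_r // => w /negbTE ->; done.
Qed.

Lemma rsum_const_pred (V : finType) (b : pred V) (c : R) :
  rsum (fun v => if b v then c else 0) = INR #|b| * c.
Proof.
rewrite /rsum -big_mkcond big_const /=.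
elim: #|_| => [|k IH]; first by rewrite /= ; ring.
rewrite S_INR /= IH; ring.
Qed.

Lemma rsum_INR (V : finType) (f : V -> nat) :
  rsum (fun v => INR (f v)) = INR (\sum_(v : V) f v).
Proof.
rewrite /rsum; symmetry; apply: (big_morph INR) => //; exact: plus_INR.
Qed.

Lemma rsup_ge (V : finType) (f : V -> R) v : f v <= rsup f.
Proof.
rewrite /rsup; have : v \in index_enum V by rewrite mem_index_enum.
elim: (index_enum V) => [//|x s IH]; rewrite inE big_cons => /orP [/eqP ->|/IH H].
  exact: Rmax_l.
exact: (Rle_trans _ _ _ H (Rmax_r _ _)).
Qed.

Lemma rsup_ge0 (V : finType) (f : V -> R) : 0 <= rsup f.
Proof.
rewrite /rsup; elim: (index_enum V) => [|x s IH]; rewrite ?big_nil ?big_cons; first lra.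
exact: (Rle_trans _ _ _ IH (Rmax_r _ _)).
Qed.

Lemma rsup_le (V : finType) (f : V -> R) B :
  0 <= B -> (forall v, f v <= B) -> rsup f <= B.
Proof.
move=> HB H; rewrite /rsup; apply: (big_ind (fun x => x <= B)) => //.
by move=> x y ? ?; apply: Rmax_lub.
Qed.

Lemma rsup_mono (V : finType) (f g : V -> R) :
  (forall v, f v <= g v) -> rsup f <= rsup g.
Proof.
move=> H; apply: rsup_le; first exact: rsup_ge0.
move=> v; exact: (Rle_trans _ _ _ (H v) (rsup_ge _ _)).
Qed.

Lemma other_vertex (V : finType) (v : V) : (1 < #|V|)%coq_nat -> exists u, u != v.
Proof.
move=> H; case: (pickP (predC1 v)) => [u Hu|H0]; first by exists u.
exfalso; have : #|V| = #|pred1 v|.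
  apply: eq_card => x; rewrite !inE; move: (H0 x) => /= /negbFE ->; done.
rewrite card1; lia.
Qed.

Lemma deg_pos (V : finType) (adj : rel V) :
  connected_graph adj -> (1 < #|V|)%coq_nat -> forall v, (0 < deg adj v)%coq_nat.
Proof.
move=> conn n2 v; have [u Hu] := other_vertex v n2.
move: (conn v u) => /connectP [p Hp Hl].
case: p Hp Hl => [|x p] /=; first by move=> _ E; rewrite E eqxx in Hu.
move=> /andP [Hx _] _.
apply/ltP; rewrite /deg; apply/card_gt0P; exists x; done.
Qed.

Lemma P_ge0 (V : finType) (adj : rel V) :
  (forall v, (0 < deg adj v)%coq_nat) -> forall u v, 0 <= P adj u v.
Proof.
move=> Hd u v; rewrite /P; have H := lt_0_INR _ (Hd u).
have H2 : 0 < / (2 * INR (deg adj u)) by apply: Rinv_pos; lra.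
case: (u == v); case: (adj u v); lra.
Qed.

Lemma P_sum1 (V : finType) (adj : rel V) :
  (forall v, (0 < deg adj v)%coq_nat) -> forall u, rsum (P adj u) = 1.
Proof.
move=> Hd u; rewrite /P rsum_plus.
rewrite (rsum_ext (g := fun v => if v == u then / 2 else 0)); last first.
  by move=> v; rewrite eq_sym.
rewrite rsum_delta.
rewrite (rsum_ext (g := fun v => if [pred w | adj u w] v then / (2 * INR (deg adj u)) else 0)) //.
rewrite rsum_const_pred -/(deg adj u).
have H := lt_0_INR _ (Hd u); field; lra.
Qed.

Lemma pt_ge0 (V : finType) (adj : rel V) :
  (forall v, (0 < deg adj v)%coq_nat) -> forall t u v, 0 <= pt adj t u v.
Proof.
move=> Hd; elim=> [|t IH] u v /=; first by case: (u == v); lra.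
apply: rsum_ge0 => w; apply: Rmult_le_pos; [exact: IH| exact: P_ge0].
Qed.

Lemma pt_sum1 (V : finType) (adj : rel V) :
  (forall v, (0 < deg adj v)%coq_nat) -> forall t u, rsum (pt adj t u) = 1.
Proof.
move=> Hd; elim=> [|t IH] u /=.
  by rewrite (rsum_ext (g := fun v => if v == u then 1 else 0)) ?rsum_delta // => v; rewrite eq_sym.
rewrite rsum_swap -(IH u); apply: rsum_ext => w.
by rewrite rsum_scal P_sum1 // Rmult_1_r.
Qed.

Lemma maxdeg_ge (V : finType) (adj : rel V) v : (deg adj v <= maxdeg adj)%coq_nat.
Proof. apply/leP; rewrite /maxdeg; exact: (leq_bigmax v). Qed.

Lemma mindeg_le (V : finType) (adj : rel V) v : (mindeg adj <= deg adj v)%coq_nat.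
Proof.
apply/leP; rewrite /mindeg; have : v \in index_enum V by rewrite mem_index_enum.
elim: (index_enum V) => [//|x s IH]; rewrite inE big_cons => /orP [/eqP ->|/IH H].
  exact: geq_minl.
exact: (leq_trans (geq_minr _ _) H).
Qed.

Lemma mindeg_pos (V : finType) (adj : rel V) :
  (forall v, (0 < deg adj v)%coq_nat) -> (1 < #|V|)%coq_nat -> (0 < mindeg adj)%coq_nat.
Proof.
move=> Hd n2; apply/ltP; rewrite /mindeg; apply: (big_ind (fun x => leq 1 x)).
- by apply/leP; lia.
- by move=> x y Hx Hy; rewrite leq_min Hx Hy.
- by move=> i _; apply/leP; apply: Hd.
Qed.

Lemma twoE_ge (V : finType) (adj : rel V) : (#|V| * mindeg adj <= twoE adj)%coq_nat.
Proof.
apply/leP; rewrite /twoE -sum_nat_const; apply: leq_sum => v _; apply/leP; exact: mindeg_le.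
Qed.

Lemma twoE_pos (V : finType) (adj : rel V) :
  (forall v, (0 < deg adj v)%coq_nat) -> (1 < #|V|)%coq_nat -> 0 < INR (twoE adj).
Proof.
move=> Hd n2; apply: lt_0_INR; have := twoE_ge adj; have := mindeg_pos Hd n2; rewrite -multE; nia.
Qed.

Lemma pi_pos (V : finType) (adj : rel V) :
  (forall v, (0 < deg adj v)%coq_nat) -> (1 < #|V|)%coq_nat -> forall v, 0 < Defs.pi adj v.
Proof.
move=> Hd n2 v; rewrite /Defs.pi; apply: Rdiv_lt_0_compat.
  exact: lt_0_INR. exact: twoE_pos.
Qed.

Lemma pi_sum1 (V : finType) (adj : rel V) :
  (forall v, (0 < deg adj v)%coq_nat) -> (1 < #|V|)%coq_nat -> rsum (Defs.pi adj) = 1.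
Proof.
move=> Hd n2; rewrite /Defs.pi /Rdiv rsum_scalr rsum_INR -/(twoE adj).
have := twoE_pos Hd n2; move=> *; field; lra.
Qed.

Lemma pi_le (V : finType) (adj : rel V) (D : R) :
  (forall v, (0 < deg adj v)%coq_nat) -> (1 < #|V|)%coq_nat ->
  INR (maxdeg adj) / INR (mindeg adj) <= D ->
  forall v, Defs.pi adj v <= D / INR #|V|.
Proof.
move=> Hd n2 HD v; rewrite /Defs.pi.
have Hm := lt_0_INR _ (mindeg_pos Hd n2).
have Hn : 0 < INR #|V| by apply: lt_0_INR; lia.
have Ht := twoE_pos Hd n2.
have H1 : INR (deg adj v) <= D * INR (mindeg adj).
  apply: (Rle_trans _ (INR (maxdeg adj))); first by apply: le_INR; apply: maxdeg_ge.
  by move: HD; rewrite /Rdiv; move=> HD; have := Rmult_le_compat_r _ _ _ (Rlt_le _ _ Hm) HD; rewrite Rmult_assoc Rinv_l ?Rmult_1_r; lra.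
have H2 : INR #|V| * INR (mindeg adj) <= INR (twoE adj).
  rewrite -mult_INR; apply: le_INR; exact: twoE_ge.
apply (Rmult_le_reg_r (INR (twoE adj) * INR #|V|)); first nra.
have -> : INR (deg adj v) / INR (twoE adj) * (INR (twoE adj) * INR #|V|) = INR (deg adj v) * INR #|V| by field; lra.
have -> : D / INR #|V| * (INR (twoE adj) * INR #|V|) = D * INR (twoE adj) by field; lra.
have HD0 : 0 <= D.
  have : 0 <= INR (maxdeg adj) / INR (mindeg adj) by apply: Rmult_le_pos; [apply: pos_INR| apply: Rlt_le; apply: Rinv_pos; lra].
  lra.
nra.
Qed.

Lemma rsum0 (V : finType) : rsum (fun _ : V => 0) = 0.
Proof. by rewrite /rsum big1. Qed.

Lemma ptW_inW (V : finType) (adj : rel V) (W : {set V}) t u v :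
  v \in W -> ptW adj W t u v = 0.
Proof.
case: t => [|t] /= Hv; last by rewrite Hv.
case: eqP => [->|] //=; by rewrite Hv.
Qed.

Lemma ptW_ge0 (V : finType) (adj : rel V) (W : {set V}) :
  (forall v, (0 < deg adj v)%coq_nat) -> forall t u v, 0 <= ptW adj W t u v.
Proof.
move=> Hd; elim=> [|t IH] u v /=; first by case: (_ && _); lra.
case: (v \in W); first lra.
apply: rsum_ge0 => w; apply: Rmult_le_pos; [exact: IH| exact: P_ge0].
Qed.

Lemma ptW_le_pt (V : finType) (adj : rel V) (W : {set V}) :
  (forall v, (0 < deg adj v)%coq_nat) -> forall t u v, ptW adj W t u v <= pt adj t u v.
Proof.
move=> Hd; elim=> [|t IH] u v /=; first by case: (u == v) => /=; [case: (u \notin W) => /=|]; lra.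
case: (v \in W).
  by apply: rsum_ge0 => w; apply: Rmult_le_pos; [exact: pt_ge0| exact: P_ge0].
apply: rsum_le => w; apply: Rmult_le_compat_r; [exact: P_ge0| exact: IH].
Qed.

Lemma ptW_comp (V : finType) (adj : rel V) (W : {set V}) a b u v :
  ptW adj W (a + b) u v = rsum (fun w => ptW adj W a u w * ptW adj W b w v).
Proof.
elim: b v => [|b IH] v.
  rewrite addn0 /=.
  rewrite (rsum_ext (g := fun w => if w == v then ptW adj W a u v * (if v \notin W then 1 else 0) else 0)).
    rewrite rsum_delta; case: (boolP (v \in W)) => Hv /=; last by rewrite Rmult_1_r.
    by rewrite ptW_inW // Rmult_0_r.
  move=> w; case: eqP => [->|Hne] /=; first by case: (v \notin W).
  by rewrite Rmult_0_r.
rewrite addnS /=; case: (v \in W).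
  by rewrite (rsum_ext (g := fun _ => 0)) ?rsum0 // => w; rewrite Rmult_0_r.
rewrite (rsum_ext (g := fun x => rsum (fun w => ptW adj W a u w * ptW adj W b w x * P adj x v))).
  rewrite rsum_swap; apply: rsum_ext => w; rewrite -rsum_scal; apply: rsum_ext => x; ring.
by move=> x; rewrite IH -rsum_scalr.
Qed.

Definition Q (V : finType) (adj : rel V) (W : {set V}) t u := rsum (ptW adj W t u).

Lemma Q_ge0 (V : finType) (adj : rel V) (W : {set V}) :
  (forall v, (0 < deg adj v)%coq_nat) -> forall t u, 0 <= Q adj W t u.
Proof. move=> Hd t u; apply: rsum_ge0 => v; exact: ptW_ge0. Qed.

Lemma Q_le1 (V : finType) (adj : rel V) (W : {set V}) :
  (forall v, (0 < deg adj v)%coq_nat) -> forall t u, Q adj W t u <= 1.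
Proof.
move=> Hd t u; rewrite -(pt_sum1 Hd t u); apply: rsum_le => v; exact: ptW_le_pt.
Qed.

Lemma Q_comp (V : finType) (adj : rel V) (W : {set V}) a b u :
  Q adj W (a + b) u = rsum (fun w => ptW adj W a u w * Q adj W b w).
Proof.
rewrite /Q (rsum_ext (g := fun v => rsum (fun w => ptW adj W a u w * ptW adj W b w v))).
  by rewrite rsum_swap; apply: rsum_ext => w; rewrite rsum_scal.
by move=> v; rewrite ptW_comp.
Qed.

Lemma Q_decr (V : finType) (adj : rel V) (W : {set V}) :
  (forall v, (0 < deg adj v)%coq_nat) -> forall a b u, Q adj W (a + b) u <= Q adj W a u.
Proof.
move=> Hd a b u; rewrite Q_comp /Q; apply: rsum_le => w.
have := Q_le1 W Hd b w; have := ptW_ge0 W Hd a u w; rewrite /Q; nra.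
Qed.

Lemma mixed_bounds (V : finType) (adj : rel V) t :
  (forall v, (0 < deg adj v)%coq_nat) -> (1 < #|V|)%coq_nat ->
  unif_mixed adj t -> forall u v,
  Defs.pi adj v / 2 <= pt adj t u v <= 3 / 2 * Defs.pi adj v.
Proof.
move=> Hd n2 Hm u v; have Hp := pi_pos Hd n2 v; move: (Hm u v).
set x := pt adj t u v / Defs.pi adj v.
have Hx : pt adj t u v = x * Defs.pi adj v by rewrite /x; field; lra.
move=> H; have Hb : - / 2 <= x - 1 <= / 2.
  move: H; rewrite /Rabs; case: Rcase_abs => h H; lra.
clearbody x; rewrite Hx; split; nra.
Qed.

Lemma Q_block (V : finType) (adj : rel V) (W : {set V}) tm k :
  (forall v, (0 < deg adj v)%coq_nat) -> (1 < #|V|)%coq_nat ->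
  unif_mixed adj tm -> forall w,
  Q adj W (tm + k) w <= 1 - Cap adj k.+1 W / 2.
Proof.
move=> Hd n2 Hm w; rewrite Q_comp.
apply: (Rle_trans _ (rsum (fun x => pt adj tm w x + (-/2) * Defs.pi adj x
                                   + /2 * (Defs.pi adj x * Q adj W k x)))).
  apply: rsum_le => x.
  have [H1 H2] := mixed_bounds Hd n2 Hm w x.
  have := Q_le1 W Hd k x; have := Q_ge0 W Hd k x; have := ptW_le_pt W Hd tm w x.
  have := ptW_ge0 W Hd tm w x; nra.
rewrite !rsum_plus rsum_scal rsum_scal pt_sum1 // pi_sum1 //.
rewrite /Cap /survive /Q.
have Hs : forall s, 1 + - / 2 * 1 + / 2 * s <= 1 - (1 - s) / 2 by move=> s; lra.
exact: Hs.
Qed.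

Lemma survive_ge0 (V : finType) (adj : rel V) (W : {set V}) r :
  (forall v, (0 < deg adj v)%coq_nat) -> (1 < #|V|)%coq_nat -> 0 <= survive adj W r.
Proof.
move=> Hd n2; case: r => [|k] /=; first lra.
apply: rsum_ge0 => u; apply: Rmult_le_pos; first exact: Rlt_le (pi_pos Hd n2 u).
apply: rsum_ge0 => v; exact: ptW_ge0.
Qed.

Lemma Q_geom (V : finType) (adj : rel V) (W : {set V}) tm k :
  (forall v, (0 < deg adj v)%coq_nat) -> (1 < #|V|)%coq_nat ->
  unif_mixed adj tm -> forall j i u,
  Q adj W (j * (tm + k) + i) u <= (1 - Cap adj k.+1 W / 2) ^ j.
Proof.
move=> Hd n2 Hm; set q := 1 - _ / 2.
have Hq : 0 <= q by rewrite /q /Cap; have := survive_ge0 W k.+1 Hd n2; lra.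
elim=> [|j IH] i u.
  by rewrite mul0n add0n /=; exact: Q_le1.
have -> : (j.+1 * (tm + k) + i = (j * (tm + k) + i) + (tm + k))%nat.
  by rewrite mulSn; rewrite -!plusE -!multE; lia.
rewrite Q_comp /=.
apply: (Rle_trans _ (rsum (fun w => ptW adj W (j * (tm + k) + i) u w * q))).
  apply: rsum_le => w; apply: Rmult_le_compat_l; first exact: ptW_ge0.
  exact: Q_block.
rewrite rsum_scalr -/(Q adj W _ u); have := IH i u; have := Q_ge0 W Hd (j * (tm + k) + i) u.
move=> *; rewrite Rmult_comm; apply: Rmult_le_compat_l => //.
Qed.

Lemma f_bound (V : finType) (adj : rel V) (W : {set V}) tm s v :
  (forall v, (0 < deg adj v)%coq_nat) -> (1 < #|V|)%coq_nat ->
  unif_mixed adj tm ->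
  ptW adj W (s + tm) v v <= 3 / 2 * Defs.pi adj v * Q adj W s v.
Proof.
move=> Hd n2 Hm; rewrite ptW_comp /Q Rmult_comm -rsum_scalr.
apply: rsum_le => w; apply: Rmult_le_compat_l; first exact: ptW_ge0.
apply: Rle_trans (ptW_le_pt W Hd _ _ _) _.
exact: (proj2 (mixed_bounds Hd n2 Hm w v)).
Qed.

Notation nsum m n F := (\big[Rplus/0]_(m <= i < n) F i).

Lemma nsum_le m n (F G : nat -> R) : (forall i, F i <= G i) -> nsum m n F <= nsum m n G.
Proof. move=> H; apply: (big_ind2 Rle) => //; [lra| move=> *; lra]. Qed.

Lemma nsum_ge0 m n (F : nat -> R) : (forall i, 0 <= F i) -> 0 <= nsum m n F.
Proof. move=> H; apply: (big_ind (Rle 0)) => //; [lra| move=> *; lra]. Qed.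

Lemma nsum_chunk m L (F : nat -> R) :
  nsum m (m + L) F = rsum (fun i : 'I_L => F (m + i)%nat).
Proof.
elim: L => [|L IH].
  by rewrite addn0 big_geq // /rsum big_ord0.
rewrite addnS big_nat_recr /=; last by rewrite leq_addr.
by rewrite IH /rsum big_ord_recr.
Qed.

Lemma nsum_split m L (F : nat -> R) :
  nsum 0 (m + L) F = nsum 0 m F + rsum (fun i : 'I_L => F (m + i)%nat).
Proof. rewrite (big_cat_nat (n:=m)) ?leq0n ?leq_addr //; by rewrite -nsum_chunk. Qed.

Lemma nsum_prefix n n' (F : nat -> R) : (n <= n')%coq_nat -> (forall i, 0 <= F i) ->
  nsum 0 n F <= nsum 0 n' F.
Proof.
move=> /leP Hn H; rewrite -(subnKC Hn) nsum_split.
have := rsum_ge0 (f := fun i : 'I_(n' - n) => F (n + i)%nat) (fun i => H _); lra.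
Qed.

Lemma rsum_const (V : finType) (c : R) : rsum (fun _ : V => c) = INR #|V| * c.
Proof. by rewrite -(rsum_const_pred predT) /=; apply: rsum_ext => v. Qed.

Fixpoint G1 (q : R) (J : nat) : R := match J with 0 => 0 | S J' => G1 q J' + q ^ J' end.
Fixpoint G2 (q : R) (J : nat) : R :=
  match J with 0 => 0 | S J' => G2 q J' + INR (S J') * q ^ J' end.

Lemma G1_le q J : 0 <= q < 1 -> G1 q J <= / (1 - q).
Proof.
move=> Hq; have E : G1 q J = (1 - q ^ J) / (1 - q).
  elim: J => [|J IH] /=; first by field; lra.
  rewrite IH; field; lra.
rewrite E; have := pow_le q J (proj1 Hq); move=> H.
apply: (Rmult_le_reg_r (1 - q)); first lra.
rewrite /Rdiv Rmult_assoc Rinv_l; lra.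
Qed.

Lemma G2_le q J : 0 <= q < 1 -> G2 q J <= / (1 - q) ^ 2.
Proof.
move=> Hq; have E : G2 q J = (1 - INR (S J) * q ^ J + INR J * q ^ (S J)) / (1 - q) ^ 2.
  elim: J => [|J IH]; first by rewrite /=; field; lra.
  change (G2 q J.+1) with (G2 q J + INR J.+1 * q ^ J).
  rewrite IH !S_INR; simpl pow; field; lra.
rewrite E; have H := pow_le q J (proj1 Hq).
have HJ := pos_INR J.
have H2 : 0 <= INR (S J) * q ^ J - INR J * q ^ (S J).
  rewrite S_INR /=; have h : 0 <= 1 + INR J * (1 - q) by nra.
  have := Rmult_le_pos _ _ H h; nra.
have H3 : 0 < (1 - q) ^ 2 by apply: pow_lt; lra.
apply: (Rmult_le_reg_r ((1 - q) ^ 2)) => //.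
rewrite /Rdiv Rmult_assoc Rinv_l; lra.
Qed.

Lemma tail_bound (g : nat -> R) (L a : nat) K q J :
  (0 < L)%coq_nat -> 0 <= q -> 0 <= K -> (forall s, 0 <= g s) ->
  (forall j i, (i < L)%coq_nat -> g (j * L + i)%nat <= K * q ^ j) ->
  nsum 0 (J * L) (fun s => INR (s + a) * g s)
    <= K * (INR L ^ 2 * G2 q J + INR L * INR a * G1 q J).
Proof.
move=> HL Hq HK Hg Hb; elim: J => [|J IH].
  by rewrite mul0n big_geq //=; lra.
rewrite mulSnr nsum_split.
have Hc : rsum (fun i : 'I_L => INR (J * L + i + a) * g (J * L + i)%nat)
        <= rsum (fun _ : 'I_L => INR (J * L + L + a) * (K * q ^ J)).
  apply: rsum_le => i; apply: Rmult_le_compat.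
  - exact: pos_INR.
  - exact: Hg.
  - apply: le_INR; have := ltn_ord i; move=> /ltP; rewrite -!plusE; lia.
  - apply: Hb; apply/ltP; exact: ltn_ord.
rewrite rsum_const card_ord in Hc.
have E : INR (J * L + L + a) = INR J * INR L + INR L + INR a.
  by rewrite -!plusE -multE !plus_INR mult_INR.
rewrite E in Hc.
have Hqj := pow_le q J Hq.
change (G2 q J.+1) with (G2 q J + INR J.+1 * q ^ J).
change (G1 q J.+1) with (G1 q J + q ^ J).
rewrite S_INR.
have HLr := pos_INR L.
apply: (Rle_trans _ _ _ (Rplus_le_compat _ _ _ _ IH Hc)).
right; ring.
Qed.

Lemma Rpower_pos x y : 0 < Rpower x y.
Proof. rewrite /Rpower; exact: exp_pos. Qed.

Lemma run_time_ge n alpha :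
  INR (run_time n alpha) > Rpower (INR n) (/ 2 - alpha / 3) - / 2.
Proof.
rewrite /run_time; set x := Rpower _ _ + / 2.
have Hx : 0 < x by rewrite /x; have := Rpower_pos (INR n) (/ 2 - alpha / 3); lra.
have [H1 H2] := base_Int_part x.
have Hz : (0 <= Int_part x)%Z.
  have : -1 < IZR (Int_part x) by lra.
  move=> /(lt_IZR (-1)) ; lia.
rewrite INR_IZR_INZ Znat.Z2Nat.id //; rewrite /x in H2 *; lra.
Qed.

Lemma not_mixed0 (V : finType) (adj : rel V) :
  (forall v, (0 < deg adj v)%coq_nat) -> (1 < #|V|)%coq_nat -> ~ unif_mixed adj 0.
Proof.
move=> Hd n2 Hm; have [v _] : exists v : V, true.
  by case: (pickP (@predT V)) => [v _|H]; [exists v| move: n2; rewrite (eq_card0 H); lia].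
have [u Hu] := other_vertex v n2.
move: (Hm u v) => /=; rewrite (negbTE Hu) /Rdiv Rmult_0_l.
rewrite Rabs_left; lra.
Qed.

Lemma final_arith (D nR chi c X Y T : R) :
  0 < D -> 0 < nR -> 0 < chi -> 0 < c -> c <= / 2 ->
  chi * Y / sqrt nR <= 2 * c -> 0 < Y -> 1 <= T -> X = T + Y - 1 ->
  3 * T - / 2 <= Y -> T + 1 <= X ->
  3 / 2 * (D / nR) * (X ^ 2 * / c ^ 2 + X * (T + 1) * / c)
    <= 2 * D + 36 * D / chi ^ 2.
Proof.
move=> HD Hn Hchi Hc Hc2 Hcap HY HT HX HTY HTX.
have Hs : 0 < sqrt nR by apply: sqrt_lt_R0.
have Hs2 : sqrt nR * sqrt nR = nR by apply: sqrt_sqrt; lra.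
set s := sqrt nR in Hs Hs2 Hcap.
set u := / c.
have Hu : 0 < u by apply: Rinv_pos.
have Hcu : c * u = 1 by rewrite /u Rinv_r; lra.
have Hu2 : 2 <= u by nra.
have HYu : Y * u <= 2 * s / chi.
  have H1 : chi * Y <= 2 * c * s.
    move: Hcap; rewrite /Rdiv => H.
    have := Rmult_le_compat_r s _ _ (Rlt_le _ _ Hs) H.
    rewrite Rmult_assoc Rinv_l; lra.
  apply: (Rmult_le_reg_l (chi * c)); first nra.
  have -> : chi * c * (2 * s / chi) = 2 * c * s by field; lra.
  have -> : chi * c * (Y * u) = chi * Y * (c * u) by ring.
  rewrite Hcu; lra.
have HX0 : 0 < X by lra.
have HX32 : X <= 3 / 2 * Y by lra.
have HXu : X * u <= 3 * s / chi.
  apply: (Rle_trans _ (3 / 2 * Y * u)); first nra.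
  have -> : 3 * s / chi = 3 / 2 * (2 * s / chi) by field; lra.
  nra.
have HXu2 : (X * u) ^ 2 <= 9 * nR / chi ^ 2.
  have -> : 9 * nR / chi ^ 2 = (3 * s / chi) ^ 2 by rewrite -Hs2; field; lra.
  apply: pow_incr; split; [nra| done].
have E : / c ^ 2 = u ^ 2 by rewrite /u pow_inv.
rewrite E -/u.
have A : X * (T + 1) * u <= (X * u) ^ 2 / 2.
  have : X * (T + 1) <= X * X by nra.
  move=> H; have : X * (T + 1) * u <= X * X * u by nra.
  move=> H'; have : X * X * u <= X * X * (u * u) / 2 by nra.
  rewrite /=; lra.
have B : X ^ 2 * u ^ 2 = (X * u) ^ 2 by ring.
rewrite B.
have HD' : 0 <= 3 / 2 * (D / nR) by apply: Rmult_le_pos; [lra| apply: Rlt_le; apply: Rdiv_lt_0_compat].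
apply: (Rle_trans _ (3 / 2 * (D / nR) * (3 / 2 * (9 * nR / chi ^ 2)))).
  apply: Rmult_le_compat_l => //; lra.
have -> : 3 / 2 * (D / nR) * (3 / 2 * (9 * nR / chi ^ 2)) = 81 / 4 * (D / chi ^ 2) by field; lra.
have Hc2' : 0 < chi ^ 2 by apply: pow_lt.
have : 0 < D / chi ^ 2 by apply: Rdiv_lt_0_compat.
rewrite /Rdiv; move=> *; nra.
Qed.
Close Scope R_scope.

Theorem mainTheorem20 :
  forall D alpha theta : R, (0 < D)%R -> (0 < alpha)%R -> (0 < theta)%R ->
  exists N0 : nat,
  forall (V : finType) (adj : rel V),
    simple_graph adj -> connected_graph adj ->
    (N0 <= #|V|)%N ->
    (* (bal) *)
    (INR (maxdeg adj) / INR (mindeg adj) <= D)%R ->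
    forall tm : nat, is_tmix adj tm ->
    (* (mix) *)
    (INR tm <= Rpower (INR #|V|) (/ 2 - alpha))%R ->
    (* (esc) *)
    (bubble adj tm <= theta)%R ->
    forall (chi : R) (W : {set V}), (0 < chi)%R -> W != set0 ->
    (Cap adj (run_time #|V| alpha) W
       >= chi * INR (run_time #|V| alpha) / sqrt (INR #|V|))%R ->
    bubbleW_le adj W (theta + 2 * D + 36 * D / (chi ^ 2))%R.
Proof.
move=> D alpha theta HD Ha Ht.
set x0 := Rpower 3 (3 / (2 * alpha)).
exists (Nat.max 2 (Z.to_nat (up x0))).
move=> V adj sg conn HN Hbal tm [Hm _] Hmix Hesc chi W Hchi _ HCap N.
Open Scope R_scope.
have HN' : (Nat.max 2 (Z.to_nat (up x0)) <= #|V|)%coq_nat.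
  first [exact HN | apply/leP; exact HN].
have n2 : (1 < #|V|)%coq_nat by lia.
have Hd := deg_pos conn n2.
have Htm1 : (1 <= tm)%coq_nat.
  case: (Nat.eq_dec tm 0) => [E|E]; last lia.
  by rewrite E in Hm; case: (not_mixed0 Hd n2 Hm).
set nR := INR #|V|.
have Hn : 0 < nR by apply: lt_0_INR; lia.
have Hx0 : 0 < x0 by apply: Rpower_pos.
have Hx0n : x0 <= nR.
  have [Hup _] := archimed x0.
  have Hz : (0 <= up x0)%Z by apply: le_IZR; lra.
  apply: (Rle_trans _ (INR (Z.to_nat (up x0)))).
    by rewrite INR_IZR_INZ Znat.Z2Nat.id //; lra.
  apply: le_INR; lia.
have H3 : 3 <= Rpower nR (2 * alpha / 3).
  apply: (Rle_trans _ (Rpower x0 (2 * alpha / 3))).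
    right; rewrite /x0 Rpower_mult.
    have -> : 3 / (2 * alpha) * (2 * alpha / 3) = 1 by field; lra.
    rewrite Rpower_1 //; lra.
  apply: Rle_Rpower_l; lra.
have Hsplit : Rpower nR (/ 2 - alpha / 3) = Rpower nR (/ 2 - alpha) * Rpower nR (2 * alpha / 3).
  rewrite -Rpower_plus; f_equal; field.
have Htm1R : 1 <= INR tm by apply: (le_INR 1); lia.
have HP2 : 3 * INR tm <= Rpower nR (/ 2 - alpha / 3).
  rewrite Hsplit; have Hm1 : INR tm <= Rpower nR (/ 2 - alpha) by exact: Hmix.
  have := Rmult_le_compat _ _ _ _ (pos_INR tm) (ltac:(lra) : 0 <= 3) Hm1 H3; lra.
have Hr := run_time_ge #|V| alpha.
rewrite -/nR in Hr.
set r := run_time #|V| alpha in Hr HCap.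
have Hr3 : (2 < r)%coq_nat by apply: INR_lt; rewrite /=; lra.
have [k Ek] : exists k, r = k.+1 by exists r.-1; lia.
rewrite Ek in HCap Hr; rewrite -/nR in HCap.
have Hsurv := survive_ge0 W k.+1 Hd n2.
set c := Cap adj k.+1 W / 2.
have Hc2 : c <= / 2 by rewrite /c /Cap; lra.
have Hcpos : 0 < c.
  have : 0 < chi * INR k.+1 / sqrt nR.
    apply: Rdiv_lt_0_compat; [apply: Rmult_lt_0_compat => //; lra| exact: sqrt_lt_R0].
  rewrite /c; lra.
set q := 1 - c.
have Hq : 0 <= q < 1 by rewrite /q; lra.
set L := (tm + k)%nat.
have HL : (0 < L)%coq_nat by rewrite /L; rewrite -?plusE; lia.
set K := 3 / 2 * (D / nR).
have HK : 0 <= K by rewrite /K; apply: Rmult_le_pos; [lra| apply: Rlt_le; apply: Rdiv_lt_0_compat].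
set g := fun s => rsup (fun v => ptW adj W (s + tm) v v).
have Hg : forall j i, (i < L)%coq_nat -> g (j * L + i)%nat <= K * q ^ j.
  move=> j i _; rewrite /g; apply: rsup_le.
    by apply: Rmult_le_pos => //; apply: pow_le; lra.
  move=> v; have H1 := f_bound W (j * L + i) v Hd n2 Hm.
  have H2 := pi_le Hd n2 Hbal v.
  have H3' := Q_geom W k Hd n2 Hm j i v.
  have H4 := Q_ge0 W Hd (j * (tm + k) + i) v.
  have H5 := Rlt_le _ _ (pi_pos Hd n2 v).
  apply: (Rle_trans _ _ _ H1); rewrite /K -/nR -/c -/q in H2 H3' *.
  rewrite /L in H4 *.
  apply: (Rle_trans _ (3 / 2 * Defs.pi adj v * q ^ j)).
    apply Rmult_le_compat_l; [apply: Rmult_le_pos => //; lra| exact H3'].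
  apply Rmult_le_compat_r; [apply: pow_le; lra| apply Rmult_le_compat_l; lra].
rewrite /bubbleW_partial.
set F := fun t => INR t.+1 * rsup (fun v => ptW adj W t v v).
change (nsum 0 N.+1 F <= theta + 2 * D + 36 * D / chi ^ 2).
have HF0 : forall t, 0 <= F t.
  move=> t; apply: Rmult_le_pos; [exact: pos_INR| exact: rsup_ge0].
have HNM : (N.+1 <= tm + N.+1 * L)%coq_nat by rewrite -?multE -?plusE; nia.
apply: (Rle_trans _ _ _ (nsum_prefix HNM HF0)).
rewrite nsum_split.
have P1 : nsum 0 tm F <= theta.
  apply: (Rle_trans _ (nsum 0 tm.+1 F)); first by apply: nsum_prefix; [lia | done].
  apply: (Rle_trans _ (bubble adj tm)) => //.
  rewrite /bubble; apply: nsum_le => t; apply: Rmult_le_compat_l; first exact: pos_INR.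
  apply: rsup_mono => v; exact: ptW_le_pt.
have P2 : rsum (fun i : 'I_(N.+1 * L) => F (tm + i)%nat)
          = nsum 0 (N.+1 * L) (fun s => INR (s + tm.+1) * g s).
  rewrite big_mkord /rsum; apply: eq_bigr => s _; rewrite /F /g.
  have E1 : (tm + s).+1 = (s + tm.+1)%nat by rewrite addnS addnC.
  have E2 : (tm + s)%nat = (s + tm)%nat by rewrite addnC.
  by rewrite E1 E2.
have P3 : nsum 0 (N.+1 * L) (fun s => INR (s + tm.+1) * g s)
   <= K * (INR L ^ 2 * G2 q N.+1 + INR L * INR tm.+1 * G1 q N.+1) := tail_bound tm.+1 N.+1 HL (proj1 Hq) HK (fun s => rsup_ge0 (fun v => ptW adj W (s + tm) v v)) Hg.
rewrite P2.
have HG1 := G1_le N.+1 Hq.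
have HG2 := G2_le N.+1 Hq.
have Hqc : 1 - q = c by rewrite /q; ring.
rewrite Hqc in HG1 HG2.
have HLR := pos_INR L.
have Htail : K * (INR L ^ 2 * G2 q N.+1 + INR L * INR tm.+1 * G1 q N.+1)
   <= K * (INR L ^ 2 * / c ^ 2 + INR L * INR tm.+1 * / c).
  apply: Rmult_le_compat_l => //; apply: Rplus_le_compat.
    apply: Rmult_le_compat_l => //; apply: pow_le; lra.
  apply: Rmult_le_compat_l => //; apply: Rmult_le_pos => //; exact: pos_INR.
have HLe : INR L = INR tm + INR k.+1 - 1.
  rewrite /L plus_INR S_INR; ring.
have Fin := final_arith (X := INR L) (Y := INR k.+1) (T := INR tm) HD Hn Hchi Hcpos Hc2.
rewrite S_INR in Htail.
have Hfin : K * (INR L ^ 2 * / c ^ 2 + INR L * (INR tm + 1) * / c) <= 2 * D + 36 * D / chi ^ 2.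
  apply: Fin.
  - rewrite /c; lra.
  - have := pos_INR k; rewrite S_INR; lra.
  - done.
  - done.
  - lra.
  - lra.
rewrite S_INR in P3.
have P4 := Rle_trans _ _ _ P3 Htail.
apply: (Rle_trans _ _ _ (Rplus_le_compat _ _ _ _ P1 (Rle_trans _ _ _ P4 Hfin))).
lra.
Qed.
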